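(* Let $\alpha_1,\ldots,\alpha_r>0$, $\beta\ge 0$ and $d>1$ be real numbers. For $1\le i\le r$ and $n\in\mathbb{N}=\{0,1,2,\ldots\}$ define intervals $I_{i,n}=[\alpha_i d^n-\beta,\ \alpha_i d^n+\beta]$, and let $I=\bigcup_{1\le i\le r}\bigcup_{n\in\mathbb{N}}I_{i,n}$. Then there are constants $C_1,C_2>0$, depending only on $\alpha_1,\ldots,\alpha_r,\beta,d$, such that for every $T\ge C_1$ the set $[0,T]\setminus I$ contains an interval of length at least $C_2T/\log(T)$. *)

(* Defs.v *)
From Stdlib Require Import Reals Lra List.
Open Scope R_scope.

Definition in_I (alphas : list R) (beta d x : R) : Prop :=
  exists a n, In a alphas /\ a * d ^ n - beta <= x /\ x <= a * d ^ n + beta.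

(* Main.v *)
Require Import Defs.
From Stdlib Require Import Reals List Lra Classical Arith Lia.
Open Scope R_scope.

Lemma build_list (H : R -> nat -> Prop) (l : list R) :
  (forall a, In a l -> forall j j', H a j -> H a j' -> j = j') ->
  exists L : list nat, (length L <= length l)%nat /\
    forall a, In a l -> forall j, H a j -> In j L.
Proof.
  induction l as [|a l IH]; intros Hu.
  - exists nil; split; simpl; [lia| tauto].
  - destruct IH as [L [HL1 HL2]].
    { intros b Hb; apply Hu; simpl; auto. }
    destruct (classic (exists j, H a j)) as [[j0 Hj0]|Hn].
    + exists (j0 :: L); split; simpl; [lia|].
      intros b [Hba|Hb] j Hj.
      * subst b. left; symmetry; apply (Hu a (or_introl eq_refl)); auto.
      * right; eauto.
    + exists L; split; simpl; [lia|].
      intros b [Hba|Hb] j Hj.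
      * subst b. exfalso; apply Hn; eauto.
      * eauto.
Qed.

Lemma pigeon (H : R -> nat -> Prop) (l : list R) :
  (forall a, In a l -> forall j j', H a j -> H a j' -> j = j') ->
  exists j, (j <= length l)%nat /\ forall a, In a l -> ~ H a j.
Proof.
  intros Hu. destruct (build_list H l Hu) as [L [HL1 HL2]].
  destruct (classic (exists j, In j (seq 0 (S (length l))) /\ ~ In j L))
    as [[j [Hj1 Hj2]]|Hn].
  - exists j. apply in_seq in Hj1. split; [lia|].
    intros a Ha HH. apply Hj2. eapply HL2; eauto.
  - exfalso.
    assert (Hinc : incl (seq 0 (S (length l))) L).
    { intros j Hj. destruct (classic (In j L)); auto. exfalso; eauto. }
    pose proof (NoDup_incl_length (seq_NoDup _ _) Hinc) as Hlen.
    rewrite length_seq in Hlen. lia.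
Qed.

Theorem lemma4p3 (alphas : list R) (beta d : R) :
  (forall a, In a alphas -> 0 < a) -> 0 <= beta -> 1 < d ->
  exists C1 C2 : R, 0 < C1 /\ 0 < C2 /\
    forall T : R, C1 <= T ->
      exists a : R,
        forall x : R, a < x < a + C2 * T / ln T ->
          0 <= x <= T /\ ~ in_I alphas beta d x.
Proof.
  intros Hpos Hb Hd.
  set (r := length alphas).
  set (R1 := INR r + 1).
  assert (HR1 : 1 <= R1) by (pose proof (pos_INR r); unfold R1; lra).
  set (D := / d).
  assert (HD0 : 0 < D) by (unfold D; apply Rinv_0_lt_compat; lra).
  assert (HD1 : D < 1) by (unfold D; rewrite <- Rinv_1; apply Rinv_lt_contravar; lra).
  assert (HdD : d * D = 1) by (unfold D; field; lra).
  set (e := 1 - D).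
  assert (He : 0 < e) by (unfold e; lra).
  set (C2 := e / (2 * R1)).
  assert (HC2 : 0 < C2) by (unfold C2; apply Rdiv_lt_0_compat; lra).
  assert (HC2e : R1 * C2 = e / 2) by (unfold C2; field; lra).
  set (C1 := exp 1 + 4 * R1 * beta / e + 1).
  assert (Hb' : 0 <= 4 * R1 * beta / e).
  { apply Rmult_le_pos; [|left; apply Rinv_0_lt_compat; lra].
    apply Rmult_le_pos; lra. }
  assert (Hexp : 0 < exp 1) by apply exp_pos.
  exists C1, C2. split; [unfold C1; lra|]. split; [exact HC2|].
  intros T HT.
  assert (HT0 : 0 < T) by (unfold C1 in HT; lra).
  assert (Hln : 1 <= ln T).
  { rewrite <- (ln_exp 1). left. apply ln_increasing; auto. unfold C1 in HT; lra. }
  set (g := C2 * T / ln T).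
  assert (Hg0 : 0 < g).
  { unfold g. apply Rdiv_lt_0_compat; [apply Rmult_lt_0_compat|]; lra. }
  assert (HgC : g <= C2 * T).
  { unfold g. apply Rle_trans with (C2 * T / 1); [|lra].
    unfold Rdiv. apply Rmult_le_compat_l; [apply Rmult_le_pos; lra|].
    apply Rinv_le_contravar; lra. }
  assert (Hbeta : 4 * R1 * beta <= T * e).
  { assert (4 * R1 * beta / e <= T) by (unfold C1 in HT; lra).
    apply Rmult_le_compat_r with (r := e) in H; [|lra].
    unfold Rdiv in H. rewrite Rmult_assoc, Rinv_l in H; lra. }
  assert (HK : R1 * (g + 2 * beta) <= T * e).
  { assert (R1 * g <= R1 * (C2 * T)) by (apply Rmult_le_compat_l; lra).
    assert (R1 * (C2 * T) = T * e / 2) by (rewrite <- Rmult_assoc, HC2e; field).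
    nra. }
  set (X := T * D).
  assert (HdX : d * X = T) by (unfold X; rewrite <- Rmult_assoc, (Rmult_comm d T), Rmult_assoc, HdD; ring).
  assert (HX0 : 0 < X) by (unfold X; apply Rmult_lt_0_compat; lra).
  assert (HTe : T * e = T - X) by (unfold X, e; ring).
  set (aj := fun j : nat => X + beta + INR j * (g + 2 * beta)).
  set (H := fun (al : R) (j : nat) => exists n x, X <= al * d ^ n < T /\
             aj j < x < aj j + g /\ al * d ^ n - beta <= x <= al * d ^ n + beta).
  assert (Hu : forall al, In al alphas -> forall j j', H al j -> H al j' -> j = j').
  { intros al Hal j j' [n [x [Hc1 [Hx1 Hx2]]]] [m [x' [Hc2 [Hx1' Hx2']]]].
    pose proof (Hpos al Hal) as Hal0.
    assert (Hnm : n = m).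
    { assert (Hgen : forall p q, (p < q)%nat -> X <= al * d ^ p -> al * d ^ q < T -> False).
      { intros p q Hpq Hp Hq.
        assert (Hpw : d ^ S p <= d ^ q) by (apply Rle_pow; [lra|lia]).
        simpl in Hpw.
        assert (al * (d * d ^ p) <= al * d ^ q) by (apply Rmult_le_compat_l; lra).
        assert (d * X <= d * (al * d ^ p)) by (apply Rmult_le_compat_l; lra).
        nra. }
      destruct (lt_eq_lt_dec n m) as [[Hlt|Heq]|Hgt]; auto.
      - exfalso; apply (Hgen n m Hlt); lra.
      - exfalso; apply (Hgen m n Hgt); lra. }
    subst m.
    assert (Hgen2 : forall p q, (p < q)%nat -> aj q - aj p >= g + 2 * beta).
    { intros p q Hpq. unfold aj.
      assert (Hpq' : INR (S p) <= INR q) by (apply le_INR; lia).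
      rewrite S_INR in Hpq'.
      assert ((INR p + 1) * (g + 2 * beta) <= INR q * (g + 2 * beta))
        by (apply Rmult_le_compat_r; lra).
      lra. }
    destruct (lt_eq_lt_dec j j') as [[Hlt|Heq]|Hgt]; auto.
    - specialize (Hgen2 _ _ Hlt). lra.
    - specialize (Hgen2 _ _ Hgt). lra. }
  destruct (pigeon H alphas Hu) as [j [Hjr Hj]].
  exists (aj j).
  assert (HINR : INR j <= INR r) by (apply le_INR; exact Hjr).
  assert (Haj0 : 0 <= INR j * (g + 2 * beta))
    by (apply Rmult_le_pos; [apply pos_INR| lra]).
  assert (HajT : aj j + g <= T - beta).
  { unfold aj.
    assert (INR j * (g + 2 * beta) <= INR r * (g + 2 * beta))
      by (apply Rmult_le_compat_r; lra).
    unfold R1 in HK. lra. }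
  intros x Hx. fold g in Hx.
  split.
  - split; [unfold aj in Hx; lra| lra].
  - intros [al [n [Hin [H1 H2]]]].
    destruct (Rlt_le_dec (al * d ^ n) X) as [Hc|Hc].
    + unfold aj in Hx. lra.
    + destruct (Rlt_le_dec (al * d ^ n) T) as [Hc'|Hc'].
      * apply (Hj al Hin). exists n, x. split; [lra|]. split; lra.
      * lra.
Qed.
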